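(* Let $m$ be an odd positive integer and let $D_{2m}=\langle a,b\mid a^m=b^2=1,\ b^{-1}ab=a^{-1}\rangle$ be the dihedral group of order $2m$. For every prime $p$ dividing $m$ write $m=p^{k_p}m_p$ with $p\nmid m_p$, and let ''$u\in_p\langle v\rangle$'' abbreviate $\bigvee_{j=0}^{p^{k_p}-1}(u=v^j)$. Then the following d-identities form a basis of d-identities of $D_{2m}$ (i.e. they all hold in $D_{2m}$, and every group satisfying all of them is isomorphic to a section of $D_{2m}$): (1) $\omega_{2m}=\bigvee_{0\le i<j\le 2m}(x_i=x_j)$; (2) $(x^2=1)\vee(y^2=1)\vee(xy=yx)$; (3) $(x^2=1)\vee(x^m=1)$; (4) for every prime $p$ dividing $m$: $(x_1^2=1)\vee(x_2^2=1)\vee(x_1^{m_p}\in_p\langle x_2^{m_p}\rangle)\vee(x_2^{m_p}\in_p\langle x_1^{m_p}\rangle)$; (5) $(x_1^m=1)\vee(x_2^m=1)\vee((x_1x_2)^m=1)$.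
   Context: A d-identity (disjunctive identity) is a universally quantified formula $\forall x_1\dots x_k\,[(f_1=1)\vee\dots\vee(f_n=1)]$ with the $f_i$ words in the free group on the variables; $u=v$ abbreviates $uv^{-1}=1$. A group satisfies it if it is true for all assignments of group elements. For a group $G$, $\mathrm{dvar}(G)$ is the class of groups satisfying every d-identity satisfied by $G$; for finite $G$ it is exactly the class of groups isomorphic to sections (quotients of subgroups) of $G$. A set of d-identities is a basis of d-identities of $G$ if all its members hold in $G$ and every group satisfying them lies in $\mathrm{dvar}(G)$. *)

(* Defs.v *)
From mathcomp Require Import all_boot fingroup morphism quotient presentation.
Set Implicit Arguments. Unset Strict Implicit. Unset Printing Implicit Defensive.

Record AbsGroup := {
  gcar :> Type;
  gmul : gcar -> gcar -> gcar;
  ginv : gcar -> gcar;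
  gone : gcar;
  gmulA : forall x y z, gmul x (gmul y z) = gmul (gmul x y) z;
  gmul1 : forall x, gmul x gone = x;
  g1mul : forall x, gmul gone x = x;
  gmulV : forall x, gmul x (ginv x) = gone;
  gVmul : forall x, gmul (ginv x) x = gone }.

Section Identities.
Variables (T : Type) (mul : T -> T -> T) (one : T) (dom : T -> Prop).

Definition pw (x : T) (n : nat) : T := iter n (mul x) one.

Definition dId1 (m : nat) : Prop :=
  forall xs : nat -> T, (forall i, i <= m.*2 -> dom (xs i)) ->
  exists i j, i < j /\ j <= m.*2 /\ xs i = xs j.

Definition dId2 : Prop :=
  forall x y, dom x -> dom y ->
  pw x 2 = one \/ pw y 2 = one \/ mul x y = mul y x.

Definition dId3 (m : nat) : Prop :=
  forall x, dom x -> pw x 2 = one \/ pw x m = one.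

Definition in_p (m p : nat) (u v : T) : Prop :=
  exists j, j < p ^ logn p m /\ u = pw v j.

Definition m_p (m p : nat) : nat := m %/ p ^ logn p m.

Definition dId4 (m p : nat) : Prop :=
  forall x1 x2, dom x1 -> dom x2 ->
  pw x1 2 = one \/ pw x2 2 = one \/
  in_p m p (pw x1 (m_p m p)) (pw x2 (m_p m p)) \/
  in_p m p (pw x2 (m_p m p)) (pw x1 (m_p m p)).

Definition dId5 (m : nat) : Prop :=
  forall x1 x2, dom x1 -> dom x2 ->
  pw x1 m = one \/ pw x2 m = one \/ pw (mul x1 x2) m = one.

Definition allIds (m : nat) : Prop :=
  [/\ dId1 m, dId2, dId3 m,
      (forall p, prime p -> p %| m -> dId4 m p) & dId5 m].
End Identities.

Definition holds_in_fingroup (gT : finGroupType) (D : {set gT}) (m : nat) :=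
  allIds (fun x y : gT => (x * y)%g) 1%g (fun x => x \in D) m.

Definition holds_in_group (G : AbsGroup) (m : nat) :=
  allIds (@gmul G) (@gone G) (fun _ => True) m.

Definition iso_to_quotient (G : AbsGroup) (gT : finGroupType) (H K : {group gT}) :=
  exists f : G -> coset_of K,
    [/\ forall a b, f (gmul a b) = (f a * f b)%g,
        injective f &
        forall y, y \in (H / K)%g <-> exists g, f g = y].

Definition is_section_of (G : AbsGroup) (gT : finGroupType) (D : {set gT}) :=
  exists (H K : {group gT}), [/\ H \subset D, (K <| H)%g & iso_to_quotient G H K].

(* Main.v *)
Require Import Defs.
From mathcomp Require Import all_boot fingroup morphism quotient presentation perm cyclic sylow nilpotent pgroup.
From mathcomp Require Import ssralg zmodp zify.
From Stdlib Require Import Classical ClassicalEpsilon.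
Set Implicit Arguments. Unset Strict Implicit. Unset Printing Implicit Defensive.
Local Open Scope group_scope.


Lemma pwE (hT : finGroupType) (x : hT) n : pw (fun x y : hT => x * y) 1 x n = x ^+ n.
Proof. by elim: n => //= n ->; rewrite expgS. Qed.

Lemma gens (m : nat) (gT : finGroupType) (D : {group gT}) :
  (D \isog Grp (a : b : (a ^+ m, b ^+ 2, a ^ b = a^-1)))%g ->
  exists a b, [/\ <[a]> <*> <[b]> = D, a ^+ m = 1, b ^+ 2 = 1 & a ^ b = a^-1].
Proof.
move/isoGrp_hom=> /existsP[[a b]] /=.
rewrite !xpair_eqE /=.
case/and4P => /eqP h1 /eqP h2 /eqP h3 /eqP h4.
by exists a, b; split.
Qed.

Section Part1.
Variables (m : nat) (gT : finGroupType) (D : {group gT}) (a b : gT).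
Hypotheses (m0 : (0 < m)%N) (om : odd m) (hD : <[a]> <*> <[b]> = D)
  (ham : a ^+ m = 1) (hb2 : b ^+ 2 = 1) (hab : a ^ b = a^-1).

Lemma bV : b^-1 = b.
Proof. by apply/eqP; rewrite eq_invg_mul -expg2 hb2. Qed.

Lemma nAb : b \in 'N(<[a]>).
Proof. by apply/normP; rewrite -cycleJ hab cycleV. Qed.

Lemma DE : D :=: <[a]> * <[b]>.
Proof. by rewrite -hD norm_joinEr // cycle_subG nAb. Qed.

Lemma Ddec x : x \in D -> x \in <[a]> \/ exists2 u, u \in <[a]> & x = u * b.
Proof.
rewrite DE => /mulsgP[u v Au Bv ->].
have [i ltib ->] := cyclePmin Bv.
have ob : (#[b] <= 2)%N by apply: dvdn_leq => //; rewrite order_dvdn hb2.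
case: i ltib => [|[|i]] lti.
- by left; rewrite expg0 mulg1.
- by right; exists u => //; rewrite expg1.
- by have := leq_trans lti ob.
Qed.

Lemma conjA u : u \in <[a]> -> u ^ b = u^-1.
Proof. by case/cycleP => i ->; rewrite conjXg hab expgVn. Qed.

Lemma bub u : b * (u * b) = u ^ b.
Proof. by rewrite /conjg bV. Qed.

Lemma invol u : u \in <[a]> -> (u * b) ^+ 2 = 1.
Proof. by move=> Au; rewrite expg2 -mulgA bub conjA // mulgV. Qed.

Lemma prodb u w : u \in <[a]> -> w \in <[a]> -> (u * b) * (w * b) \in <[a]>.
Proof. by move=> Au Aw; rewrite -mulgA bub conjA // groupM ?groupV. Qed.

Lemma expm u : u \in <[a]> -> u ^+ m = 1.
Proof. by case/cycleP => i ->; rewrite -expgM mulnC expgM ham expg1n. Qed.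

Lemma cardD : (#|D| <= m.*2)%N.
Proof.
rewrite DE; apply: leq_trans (dvdn_leq _ (dvdn_cardMg _ _)) _.
  by rewrite muln_gt0 !cardG_gt0.
rewrite -!orderE -muln2 leq_mul //.
  by apply: dvdn_leq => //; rewrite order_dvdn ham.
by apply: dvdn_leq => //; rewrite order_dvdn hb2.
Qed.

Lemma part1 : holds_in_fingroup D m.
Proof.
split.
- move=> xs Hxs.
  have [inj|] := boolP (injectiveb (fun i : 'I_(m.*2.+1) => xs i)).
    have := cardD.
    have sub : [set xs (nat_of_ord i) | i : 'I_(m.*2.+1)] \subset D.
      by apply/subsetP => y /imsetP[i _ ->]; apply: Hxs; rewrite -ltnS.
    move/(leq_trans (subset_leq_card sub)).
    by rewrite card_imset ?card_ord ?ltnn //; apply/injectiveP.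
  case/injectivePn => i [j] neq eq.
  case: (ltngtP i j) => [lt|lt|eqij].
  + by exists i, j; split => //; rewrite -ltnS.
  + by exists j, i; split => //; rewrite -ltnS.
  + by case/eqP: neq; apply: val_inj.
- move=> x y Dx Dy; rewrite !pwE.
  case: (Ddec Dx) => [Ax|[u Au ->]]; last by left; rewrite invol.
  case: (Ddec Dy) => [Ay|[w Aw ->]]; last by right; left; rewrite invol.
  right; right.
  by have := cycle_abelian a => /centsP/(_ x Ax y Ay).
- move=> x Dx; rewrite !pwE.
  case: (Ddec Dx) => [Ax|[u Au ->]]; last by left; rewrite invol.
  by right; rewrite expm.
- move=> p pp pm x1 x2 D1 D2; rewrite /in_p !pwE.
  case: (Ddec D1) => [A1|[u Au ->]]; last by left; rewrite invol.
  case: (Ddec D2) => [A2|[w Aw ->]]; last by right; left; rewrite invol.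
  right; right.
  suff: (exists j, (j < p ^ logn p m)%N /\ x1 ^+ m_p m p = (x2 ^+ m_p m p) ^+ j) \/
        (exists j, (j < p ^ logn p m)%N /\ x2 ^+ m_p m p = (x1 ^+ m_p m p) ^+ j).
    by case=> [[j [lt e]]|[j [lt e]]]; [left|right]; exists j; rewrite !pwE.
  set k := logn p m; set mp := m_p m p.
  have mE : m = (mp * p ^ k)%N by rewrite /mp /m_p divnK // pfactor_dvdnn.
  have ord x : x \in <[a]> -> exists2 i, (i <= k)%N & #[x ^+ mp] = (p ^ i)%N.
    move=> Ax; apply/(dvdn_pfactor _ _ pp).
    by rewrite order_dvdn -expgM -mE expm.
  have inc u v (Au : u \in <[a]>) (Av : v \in <[a]>) :
      (#[u] %| #[v])%N -> (#[v] %| p ^ k)%N -> exists j, (j < p ^ k)%N /\ u = v ^+ j.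
    move=> duv dv.
    have : u \in <[v]>.
      rewrite -cycle_subG -(cardSg_cyclic (cycle_cyclic a)) ?cycle_subG //.
    case/cyclePmin=> j lt ->; exists j; split => //.
    by apply: leq_trans lt (dvdn_leq _ dv); rewrite expn_gt0 prime_gt0.
  have [i ik oi] := ord _ A1; have [j jk oj] := ord _ A2.
  have [ij|ji] := leqP i j.
  + left; apply: inc; rewrite ?groupX ?oi ?oj //.
      by rewrite dvdn_exp2l.
    by rewrite dvdn_exp2l.
  + right; apply: inc; rewrite ?groupX ?oi ?oj //.
      by rewrite dvdn_exp2l // ltnW.
    by rewrite dvdn_exp2l.
- move=> x1 x2 D1 D2; rewrite !pwE.
  case: (Ddec D1) => [A1|[u Au ->]]; first by left; rewrite expm.
  case: (Ddec D2) => [A2|[w Aw ->]]; first by right; left; rewrite expm.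
  by right; right; rewrite expm // prodb.
Qed.
End Part1.

Section Struct.
Variables (m : nat) (hT : finGroupType) (Gp : {group hT}).
Hypotheses (m0 : (0 < m)%N) (om : odd m).
Hypothesis H2 : {in Gp &, forall x y : hT, x ^+ 2 = 1 \/ y ^+ 2 = 1 \/ x * y = y * x}.
Hypothesis H3 : {in Gp, forall x : hT, x ^+ 2 = 1 \/ x ^+ m = 1}.
Hypothesis H4 : forall p, prime p -> (p %| m)%N -> {in Gp &, forall x1 x2 : hT,
  x1 ^+ 2 = 1 \/ x2 ^+ 2 = 1 \/
  (exists j, (j < p ^ logn p m)%N /\ x1 ^+ (m %/ p ^ logn p m) = (x2 ^+ (m %/ p ^ logn p m)) ^+ j) \/
  (exists j, (j < p ^ logn p m)%N /\ x2 ^+ (m %/ p ^ logn p m) = (x1 ^+ (m %/ p ^ logn p m)) ^+ j)}.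
Hypothesis H5 : {in Gp &, forall x1 x2 : hT, x1 ^+ m = 1 \/ x2 ^+ m = 1 \/ (x1 * x2) ^+ m = 1}.

Lemma odd1 (x : hT) : x ^+ m = 1 -> x ^+ 2 = 1 -> x = 1.
Proof.
move=> h1 h2; rewrite -h1 -(odd_double_half m) om -mul2n expgD expgM h2.
by rewrite expg1n mulg1 expg1.
Qed.

Definition N := [set x in Gp | x ^+ m == 1].

Lemma NP x : (x \in N) = (x \in Gp) && (x ^+ m == 1).
Proof. by rewrite inE. Qed.

Lemma Ncomm x y : x \in N -> y \in N -> commute x y.
Proof.
rewrite !NP => /andP[Gx /eqP xm] /andP[Gy /eqP ym].
case: (H2 Gx Gy) => [x2|[y2|//]].
  by rewrite (odd1 xm x2); apply: commute_sym; apply: commute1.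
by rewrite (odd1 ym y2); apply: commute1.
Qed.

Lemma gsN : group_set N.
Proof.
apply/group_setP; split; first by rewrite NP group1 expg1n eqxx.
move=> x y Nx Ny; have cxy := Ncomm Nx Ny; move: Nx Ny.
rewrite !NP => /andP[Gx /eqP xm] /andP[Gy /eqP ym].
by rewrite groupM // expgMn // xm ym mulg1 eqxx.
Qed.

Canonical NG := Group gsN.

Lemma NsubG : N \subset Gp.
Proof. by apply/subsetP => x; rewrite NP => /andP[]. Qed.

Lemma abN : abelian NG.
Proof. by apply/centsP => x Nx y Ny; apply: Ncomm. Qed.

Lemma Ncyc : cyclic NG.
Proof.
apply: nil_Zgroup_cyclic; last exact: abelian_nil abN.
apply/forall_inP => V /SylowP[p pp sylV].
have sVN := pHall_sub sylV; have pV := pHall_pgroup sylV.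
have VN y : y \in V -> y \in N by move/(subsetP sVN).
have ymm y : y \in V -> y ^+ m = 1 by move/VN; rewrite NP => /andP[_ /eqP].
pose x := [arg max_(x > 1 in V) #[x]].
have [x0 Vx0 maxx] : extremum_spec geq (fun z => z \in V) (fun z => #[z]) x.
  by apply: arg_maxnP; apply: group1.
have key y : y \in V -> y \in <[x0]> \/ x0 \in <[y]>.
  move=> Vy.
  have [pm|npm] := boolP (p %| m)%N; last first.
    left; suff -> : y = 1 by apply: group1.
    apply/eqP; rewrite -order_eq1; apply/eqP; apply: (pnat_1 (pi := p)).
      exact: mem_p_elt pV Vy.
    apply: pnat_dvd (_ : (p^').-nat m); first by rewrite order_dvdn ymm.
    by rewrite p'natE.
  have [mm cpmm mE] := pfactor_coprime pp m0.
  have mpE : (m %/ p ^ logn p m)%N = mm by rewrite {1}mE mulnK // expn_gt0 prime_gt0.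
  have gen z : z \in V -> <[z]> = <[z ^+ mm]>.
    move=> Vz; apply/eqP; rewrite -[_ == _]/(generator <[z]> (z ^+ mm)).
    rewrite generator_coprime; apply: (pnat_coprime (pi := p)).
      exact: mem_p_elt pV Vz.
    by rewrite p'natE // -prime_coprime.
  have Gy : y \in Gp by apply: (subsetP NsubG); apply: VN.
  have Gx : x0 \in Gp by apply: (subsetP NsubG); apply: VN.
  case: (H4 pp pm Gy Gx) => [y2|[x2|[[j [_ e]]|[j [_ e]]]]].
  - by left; rewrite (odd1 (ymm _ Vy) y2) group1.
  - by right; rewrite (odd1 (ymm _ Vx0) x2) group1.
  - left; rewrite -cycle_subG gen // -mpE e -expgM.
    exact: cycleX.
  - right; rewrite -cycle_subG gen // -mpE e -expgM.
    exact: cycleX.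
apply: (cyclicS (G := <[x0]>%G)); last exact: cycle_cyclic.
apply/subsetP => y Vy; case: (key y Vy) => // xy.
have sxy : <[x0]> \subset <[y]> by rewrite cycle_subG.
suff e : <[x0]> = <[y]> by move: (cycle_id y); rewrite -e.
apply/eqP; rewrite eqEcard sxy /=.
by rewrite -!orderE; apply: maxx.
Qed.


Lemma structure : (exists g, Gp :=: <[g]> /\ g ^+ m = 1) \/
  (exists g t, [/\ <[g]> <*> <[t]> = Gp, g ^+ m = 1, t ^+ 2 = 1 & g ^ t = g^-1]).
Proof.
have [g Ng] := cyclicP Ncyc.
have gN : g \in N by rewrite Ng cycle_id.
have gm : g ^+ m = 1 by move: gN; rewrite NP => /andP[_ /eqP].
have Gg : g \in Gp by move: gN; rewrite NP => /andP[].
have [sub|] := boolP (Gp \subset N).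
  left; exists g; split => //; apply/eqP.
  by rewrite -Ng eqEsubset sub NsubG.
case/subsetPn => t Gt tN.
have tm : t ^+ m != 1 by apply: contra tN => tm; rewrite NP Gt.
have t2 : t ^+ 2 = 1 by case: (H3 Gt) => // /eqP; rewrite (negbTE tm).
have tV : t^-1 = t by apply/eqP; rewrite eq_invg_mul -expg2 t2.
right; exists g, t; split => //.
- apply/eqP; rewrite eqEsubset join_subG !cycle_subG Gg Gt andbT.
  apply/subsetP => x Gx.
  have [xN|xN] := boolP (x \in N).
    by apply: (subsetP (joing_subl _ _)); rewrite -Ng.
  have xm : x ^+ m != 1 by apply: contra xN => xm; rewrite NP Gx.
  have xtN : x * t \in N.
    case: (H5 Gx Gt) => [/eqP|[/eqP|xt]]; rewrite ?(negbTE xm) ?(negbTE tm) //.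
    by rewrite NP groupM // xt eqxx.
  have -> : x = (x * t) * t by rewrite -mulgA -expg2 t2 mulg1.
  rewrite groupM //.
    by apply: (subsetP (joing_subl _ _)); rewrite -Ng.
  by apply: (subsetP (joing_subr _ _)); rewrite cycle_id.
- have gtN : g * t \notin N.
    apply: contra tN => gtN; have -> : t = g^-1 * (g * t) by rewrite mulKg.
    by rewrite groupM ?groupV.
  have Ggt : g * t \in Gp by rewrite groupM.
  have gtm : (g * t) ^+ m != 1 by apply: contra gtN => e; rewrite NP Ggt.
  have gt2 : (g * t) ^+ 2 = 1 by case: (H3 Ggt) => // /eqP; rewrite (negbTE gtm).
  rewrite /conjg tV; apply/esym/eqP; rewrite eq_invg_mul mulgA.
  by rewrite -expg2 gt2.
Qed.

End Struct.
Import GRing.Theory.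

Section Model.
Variable n : nat.
Local Notation Z := ('Z_(n.+2)).
Definition rr : {perm Z} := perm (@addIr _ (1%R : Z)).
Definition ss : {perm Z} := perm (@oppr_inj Z).

Lemma rrX k (i : Z) : (rr ^+ k) i = (i + k%:R)%R.
Proof.
elim: k => [|k IH]; first by rewrite expg0 perm1 addr0.
by rewrite expgSr permM IH permE /= mulrSr addrA.
Qed.

Lemma rrm : rr ^+ n.+2 = 1.
Proof. by apply/permP => i; rewrite rrX char_Zp // addr0 ?perm1. Qed.

Lemma ss2 : ss ^+ 2 = 1.
Proof. by apply/permP => i; rewrite expg2 permM !permE /= opprK ?perm1. Qed.

Lemma ssV : ss^-1 = ss.
Proof. by apply/eqP; rewrite eq_invg_mul -expg2 ss2. Qed.

Lemma rrss : rr ^ ss = rr^-1.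
Proof.
apply/eqP; rewrite eq_mulgV1 invgK; apply/eqP/permP => i.
rewrite /conjg ssV !permM !permE /= ?perm1.
by rewrite opprD opprK subrK.
Qed.

Lemma rr_order : (n.+2 %| #[rr])%N.
Proof.
have := congr1 (fun p : {perm Z} => p 0%R) (expg_order rr).
rewrite rrX add0r perm1 => e.
have := congr1 (@nat_of_ord _) e.
by rewrite val_Zp_nat //= /dvdn => ->.
Qed.
End Model.

Lemma model (m : nat) (gT : finGroupType) (D : {group gT}) :
  (0 < m)%N ->
  (D \isog Grp (a : b : (a ^+ m, b ^+ 2, a ^ b = a^-1)))%g ->
  exists2 a', a' \in D & (m %| #[a'])%N.
Proof.
case: m => [//|[|n]] _ hD; first by exists 1; rewrite ?group1 ?dvd1n.
pose X := (<[rr n]> <*> <[ss n]>)%G.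
have : X \homg D.
  rewrite hD; apply/existsP; exists (rr n, ss n); rewrite /= !xpair_eqE /=.
  by rewrite eqxx rrm ss2 rrss !eqxx.
case/homgP => f fD.
have : rr n \in f @* D by rewrite fD; apply: (subsetP (joing_subl _ _)); apply: cycle_id.
case/morphimP => a' Da' _ e.
exists a' => //; apply: dvdn_trans (rr_order n) _; rewrite e.
exact: morph_order.
Qed.

Lemma enumG (G : AbsGroup) (m : nat) :
  dId1 (fun _ : G => True) m ->
  exists n (xs : nat -> G), (forall i j, (i < n)%N -> (j < n)%N -> xs i = xs j -> i = j) /\
     (forall y, exists i, (i < n)%N /\ xs i = y).
Proof.
move=> h1.
suff: forall d k (xs : nat -> G), (m.*2.+1 - k <= d)%N ->
   (forall i j, (i < k)%N -> (j < k)%N -> xs i = xs j -> i = j) ->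
   exists n (xs : nat -> G), (forall i j, (i < n)%N -> (j < n)%N -> xs i = xs j -> i = j) /\
     (forall y, exists i, (i < n)%N /\ xs i = y).
  by move/(_ m.*2.+1 0 (fun _ => gone G)); apply => //; rewrite sub0n.
elim=> [|d IH] k xs hd inj.
  have [i [j [ij [jm e]]]] := h1 xs (fun _ _ => I).
  have := inj i j; rewrite e => /(_ _ _ erefl); lia.
have [surj|nsurj] := classic (forall y, exists i, (i < k)%N /\ xs i = y).
  by exists k, xs.
have [y hy] := not_all_ex_not _ _ nsurj.
apply: (IH k.+1 (fun i => if i == k then y else xs i)); first lia.
move=> i j; rewrite !ltnS.
case: (eqVneq i k) => [->|ik]; case: (eqVneq j k) => [->|jk] //.
- move=> _ jk' e; case: hy; exists j; split; [lia | by []].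
- move=> ik' _ e; case: hy; exists i; split; [lia | by []].
- move=> ik' jk'; apply: inj; lia.
Qed.

Section Cayley.
Variables (G : AbsGroup) (n : nat) (xs : nat -> G).
Hypothesis xinj : forall i j, (i < n)%N -> (j < n)%N -> xs i = xs j -> i = j.
Hypothesis xsurj : forall y, exists i, (i < n)%N /\ xs i = y.

Lemma xsurj' (y : G) : exists i : 'I_n, xs i = y.
Proof. by have [i [lt e]] := xsurj y; exists (Ordinal lt). Qed.

Definition idx (y : G) : 'I_n := proj1_sig (constructive_indefinite_description _ (xsurj' y)).

Lemma idxK y : xs (idx y) = y.
Proof. exact: proj2_sig (constructive_indefinite_description _ (xsurj' y)). Qed.

Lemma xsK (i : 'I_n) : idx (xs i) = i.
Proof. by apply: val_inj; apply: xinj; rewrite ?ltn_ord ?idxK. Qed.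

Lemma cancelr (a b g : G) : gmul a g = gmul b g -> a = b.
Proof.
move=> e; rewrite -(gmul1 a) -(gmul1 b) -(gmulV g) !gmulA.
by rewrite e.
Qed.

Lemma Rf_inj (g : G) : injective (fun i : 'I_n => idx (gmul (xs i) g)).
Proof.
move=> i j /(congr1 (fun k : 'I_n => xs k)); rewrite !idxK => /cancelr e.
by apply: val_inj; apply: xinj; rewrite ?ltn_ord.
Qed.

Definition R (g : G) : {perm 'I_n} := perm (@Rf_inj g).

Lemma RM a b : R (gmul a b) = R a * R b.
Proof.
apply/permP => i; rewrite permM !permE; apply: val_inj; apply: xinj; rewrite ?ltn_ord //.
by rewrite !idxK gmulA.
Qed.

Lemma R1 : R (gone G) = 1.
Proof. by apply/permP => i; rewrite perm1 permE gmul1 xsK. Qed.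

Lemma R_inj : injective R.
Proof.
move=> a b e; have := congr1 (fun p : {perm 'I_n} => p (idx (gone G))) e.
rewrite !permE => /(congr1 (fun k : 'I_n => xs k)) /=.
by rewrite !idxK !g1mul.
Qed.

Lemma RX x k : R (pw (@gmul G) (gone G) x k) = R x ^+ k.
Proof. by elim: k => [|k IH] /=; rewrite ?R1 // RM IH expgS. Qed.

Definition Gp := [set R (xs i) | i : 'I_n].

Lemma memGp z : z \in Gp <-> exists g, z = R g.
Proof.
split; first by case/imsetP => i _ ->; exists (xs i).
by case=> g ->; apply/imsetP; exists (idx g); rewrite ?idxK.
Qed.

Lemma RGp g : R g \in Gp.
Proof. by apply/memGp; exists g. Qed.

Lemma gsGp : group_set Gp.
Proof.
apply/group_setP; split; first by rewrite -R1 RGp.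
by move=> x y /memGp[a ->] /memGp[b ->]; rewrite -RM RGp.
Qed.

Canonical GpG := Group gsGp.

End Cayley.

Lemma part2 (m : nat) (gT : finGroupType) (D : {group gT}) :
  (0 < m)%N -> odd m ->
  (D \isog Grp (a : b : (a ^+ m, b ^+ 2, a ^ b = a^-1)))%g ->
  forall G : AbsGroup, holds_in_group G m -> is_section_of G D.
Proof.
move=> m0 om hD G [h1 h2 h3 h4 h5].
have [n [xs [xinj xsurj]]] := enumG h1.
set Gp := GpG xinj xsurj.
set R := R xinj xsurj.
have RM a b : R (gmul a b) = R a * R b by apply: RM.
have R1 : R (gone G) = 1 by apply: R1.
have RX x k : R (pw (@gmul G) (gone G) x k) = R x ^+ k by apply: RX.
have memGp z : z \in Gp <-> exists g, z = R g by apply: memGp.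
have RGp g : R g \in Gp by apply: RGp.
have H2 : {in Gp &, forall x y, x ^+ 2 = 1 \/ y ^+ 2 = 1 \/ x * y = y * x}.
  move=> x y /memGp[a ->] /memGp[b ->].
  case: (h2 a b I I) => [e|[e|e]]; [left|right; left|right; right];
    by rewrite -?RX ?e ?R1 // -!RM e.
have H3 : {in Gp, forall x, x ^+ 2 = 1 \/ x ^+ m = 1}.
  move=> x /memGp[a ->].
  by case: (h3 a I) => e; [left|right]; rewrite -RX e R1.
have H5 : {in Gp &, forall x1 x2, x1 ^+ m = 1 \/ x2 ^+ m = 1 \/ (x1 * x2) ^+ m = 1}.
  move=> x y /memGp[a ->] /memGp[b ->].
  case: (h5 a b I I) => [e|[e|e]]; [left|right; left|right; right];
    by rewrite -?RM -RX e R1.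
have H4 : forall p, prime p -> (p %| m)%N -> {in Gp &, forall x1 x2,
  x1 ^+ 2 = 1 \/ x2 ^+ 2 = 1 \/
  (exists j, (j < p ^ logn p m)%N /\ x1 ^+ (m %/ p ^ logn p m) = (x2 ^+ (m %/ p ^ logn p m)) ^+ j) \/
  (exists j, (j < p ^ logn p m)%N /\ x2 ^+ (m %/ p ^ logn p m) = (x1 ^+ (m %/ p ^ logn p m)) ^+ j)}.
  move=> p pp pm x y /memGp[a ->] /memGp[b ->].
  case: (h4 p pp pm a b I I) => [e|[e|[[j [lt e]]|[j [lt e]]]]].
  - by left; rewrite -RX e R1.
  - by right; left; rewrite -RX e R1.
  - right; right; left; exists j; split => //; rewrite /m_p in e.
    by rewrite -!RX e.
  - right; right; right; exists j; split => //; rewrite /m_p in e.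
    by rewrite -!RX e.
have : exists2 H : {group gT}, H \subset D & Gp \homg H.
  case: (structure m0 om H2 H3 H4 H5) => [[g [Gpg gm]]|[g [t [Gpgt gm t2 gt]]]].
    have [a' Da' ma] := model m0 hD.
    have dvd : (#[g] %| #[a'])%N by apply: dvdn_trans ma; rewrite order_dvdn gm.
    exists <[a']>%G; first by rewrite cycle_subG.
    apply/homgP; exists [morphism of eltm dvd].
    by rewrite im_eltm Gpg.
  exists D => //; rewrite hD; apply/existsP; exists (g, t); rewrite /= !xpair_eqE /=.
  by rewrite Gpgt gm t2 gt !eqxx.
case=> H sHD /homgP[f fD].
have iso : Gp \isog (H / 'ker f).
  by have := first_isog f; rewrite fD isog_sym.
case/isogP: iso => phi injphi imphi.
exists H, ('ker f)%G; split => //; first exact: ker_normal.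
exists (fun g => phi (R g)); split.
- by move=> a b; rewrite RM morphM ?RGp.
- move=> a b /(injmP injphi) e; apply: (R_inj (xinj:=xinj) (xsurj:=xsurj)).
  exact: e (RGp a) (RGp b).
- move=> y; rewrite -imphi; split.
    by case/morphimP => z _ /memGp[g ->] ->; exists g.
  by case=> g <-; apply: mem_morphim; apply: RGp.
Qed.

Theorem mainTheorem5 (m : nat) (gT : finGroupType) (D : {group gT}) :
  0 < m -> odd m ->
  (D \isog Grp (a : b : (a ^+ m, b ^+ 2, a ^ b = a^-1)))%g ->
  holds_in_fingroup D m /\
  (forall G : AbsGroup, holds_in_group G m -> is_section_of G D).
Proof.
move=> m0 om hD; split; last exact: part2.
have [a [b [hDab ham hb2 hab]]] := gens hD.
exact: part1 hDab ham hb2 hab.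
Qed.
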